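(* Let $G$ be a finite induced regular group of odd order. If $C_G(x)\neq \beta_G(x)\cup Z(G)$ for all $x\in G$, then $G/Z(G)$ is an elementary $p$-group for some prime $p$.
   Context: For a finite group $G$, $C_G(x)$ denotes the centralizer of $x\in G$ and $Z(G)$ the center; $\beta_G(x)=\{y\in G\mid C_G(y)=C_G(x)\}$. The non-centralizer graph $\Upsilon_G$ is the simple graph with vertex set $G$ in which two distinct vertices $x,y$ are adjacent iff $C_G(x)\neq C_G(y)$; the induced non-centralizer graph $\Upsilon_{G\setminus Z(G)}$ is its induced subgraph on $G\setminus Z(G)$. $G$ is called induced regular if $\Upsilon_{G\setminus Z(G)}$ is a regular graph. A group is called an elementary $p$-group if every non-identity element has order exactly $p$ (it need not be abelian). *)

(* Defs.v *)
From mathcomp Require Import all_boot all_order all_fingroup all_solvable.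
Set Implicit Arguments. Unset Strict Implicit. Unset Printing Implicit Defensive.
Local Open Scope group_scope.

Section Defs.
Variable gT : finGroupType.

Definition beta_set (G : {group gT}) (x : gT) : {set gT} :=
  [set y in G | 'C_G[y] == 'C_G[x]].

Definition nc_adj (G : {group gT}) (x y : gT) : bool :=
  (x != y) && ('C_G[x] != 'C_G[y]).

Definition induced_regular (G : {group gT}) : Prop :=
  exists k : nat, forall x, x \in G :\: 'Z(G) ->
    #|[set y in G :\: 'Z(G) | nc_adj G x y]| = k.

End Defs.

Definition elementary_pgroup (rT : finGroupType) (p : nat) (H : {set rT}) : Prop :=
  forall q, q \in H -> q != 1 -> #[q] = p.

(* Main.v *)
Require Import Defs.
From mathcomp Require Import all_boot all_order all_fingroup all_solvable zify.
Set Implicit Arguments. Unset Strict Implicit. Unset Printing Implicit Defensive.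
Local Open Scope group_scope.

Lemma inC (gT : finGroupType) (G : {group gT}) x y :
  (y \in 'C_G[x]) = (y \in G) && (y * x == x * y).
Proof. by rewrite inE cent1E. Qed.

Lemma inZ (gT : finGroupType) (G : {group gT}) z :
  (z \in 'Z(G)) = (z \in G) && [forall g in G, z * g == g * z].
Proof.
apply/centerP/andP => [[zG cz]|[zG /forall_inP cz]]; split=> //.
  by apply/forall_inP => g gG; apply/eqP; apply: cz.
by move=> g gG; apply/eqP; apply: cz.
Qed.

Lemma Zcomm (gT : finGroupType) (G : {group gT}) z g :
  z \in 'Z(G) -> g \in G -> z * g = g * z.
Proof. by rewrite inZ => /andP[_ /forall_inP h] gG; apply/eqP; apply: h. Qed.

Lemma ZsubG (gT : finGroupType) (G : {group gT}) : 'Z(G) \subset G.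
Proof. exact: center_sub. Qed.

Lemma Csub (gT : finGroupType) (G : {group gT}) x : 'C_G[x] \subset G.
Proof. exact: subsetIl. Qed.

Lemma Cself (gT : finGroupType) (G : {group gT}) x : x \in G -> x \in 'C_G[x].
Proof. by move=> xG; rewrite inC xG eqxx. Qed.

Lemma CZ (gT : finGroupType) (G : {group gT}) z : z \in 'Z(G) -> 'C_G[z] = G.
Proof.
move=> zZ; apply/eqP; rewrite eqEsubset Csub /=; apply/subsetP => g gG.
rewrite inC gG /=; apply/eqP; exact: (esym (Zcomm zZ gG)).
Qed.

Lemma notZ (gT : finGroupType) (G : {group gT}) x : x \in G -> x \notin 'Z(G) ->
  'C_G[x] != G.
Proof.
move=> xG xZ; apply: contra xZ => /eqP E; rewrite inZ xG; apply/forall_inP => g gG.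
by move: gG; rewrite -E inC => /andP[_ /eqP ->].
Qed.

Lemma CM (gT : finGroupType) (G : {group gT}) g h :
  'C_G[g] :&: 'C_G[h] \subset 'C_G[g * h].
Proof.
apply/subsetP => u; rewrite inE !inC => /andP[/andP[uG /eqP ug] /andP[_ /eqP uh]].
by rewrite uG /= mulgA ug -mulgA uh mulgA.
Qed.

Lemma CX (gT : finGroupType) (G : {group gT}) g k : 'C_G[g] \subset 'C_G[g ^+ k].
Proof.
apply/subsetP => u; rewrite !inC => /andP[uG /eqP ug]; rewrite uG /=.
by apply/eqP; apply: commuteX.
Qed.

Lemma CV (gT : finGroupType) (G : {group gT}) g : 'C_G[g^-1] = 'C_G[g].
Proof.
apply/setP => u; rewrite !inC; case: (u \in G) => //=.
apply/eqP/eqP => h; first by rewrite -[g]invgK; apply: commuteV.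
by apply: commuteV.
Qed.

Lemma CMZ (gT : finGroupType) (G : {group gT}) g z : z \in 'Z(G) -> 'C_G[g * z] = 'C_G[g].
Proof.
move=> zZ; apply/setP => u; rewrite !inC; case uG: (u \in G) => //=.
have cz := Zcomm zZ uG.
apply/eqP/eqP => h.
  apply: (mulIg z); by rewrite -mulgA h -!mulgA cz.
by rewrite mulgA h -!mulgA cz.
Qed.

Lemma CZM (gT : finGroupType) (G : {group gT}) g z : z \in 'Z(G) -> g \in G -> 'C_G[z * g] = 'C_G[g].
Proof. by move=> zZ gG; rewrite (Zcomm zZ gG) CMZ. Qed.


Lemma inGZ (gT : finGroupType) (G : {group gT}) x :
  (x \in G :\: 'Z(G)) = (x \notin 'Z(G)) && (x \in G).
Proof. by rewrite inE. Qed.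

Lemma beta_inv (gT : finGroupType) (G : {group gT}) x y : x \in G :\: 'Z(G) ->
  (y \in beta_set G x) = (y \in G) && ('C_G[y] == 'C_G[x]).
Proof. by move=> _; rewrite inE. Qed.

Lemma beta_sub (gT : finGroupType) (G : {group gT}) x : x \in G :\: 'Z(G) ->
  beta_set G x \subset G :\: 'Z(G).
Proof.
rewrite inGZ => /andP[xZ xG]; apply/subsetP => y; rewrite inE => /andP[yG /eqP E].
rewrite inGZ yG andbT; apply/negP => yZ.
by have := notZ xG xZ; rewrite -E (CZ yZ) eqxx.
Qed.

Lemma reg_beta (gT : finGroupType) (G : {group gT}) : induced_regular G ->
  exists b, forall x, x \in G :\: 'Z(G) -> #|beta_set G x| = b.
Proof.
case=> k Hk; exists (#|G :\: 'Z(G)| - k)%N => x xGZ.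
have := cardsID [set y in G :\: 'Z(G) | nc_adj G x y] (G :\: 'Z(G)).
have -> : (G :\: 'Z(G)) :&: [set y in G :\: 'Z(G) | nc_adj G x y]
        = [set y in G :\: 'Z(G) | nc_adj G x y].
  by apply/setIidPr; apply/subsetP => y; rewrite inE => /andP[].
have -> : (G :\: 'Z(G)) :\: [set y in G :\: 'Z(G) | nc_adj G x y] = beta_set G x.
  apply/setP => y; rewrite [in RHS]inE [y \in _ :\: _]inE [y \in [set _ in _ | _]]inE.
  case yGZ: (y \in G :\: 'Z(G)) => /=.
    move: yGZ; rewrite inGZ => /andP[_ yG]; rewrite yG /= /nc_adj negb_and !negbK.
    case: eqP => [<-|_] /=; first by rewrite eqxx.
    by rewrite andbT eq_sym.
  apply/esym/negbTE; apply/negP => /andP[yG /eqP E].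
  have yb : y \in beta_set G x by rewrite inE yG E eqxx.
  by have := subsetP (beta_sub xGZ) y yb; rewrite yGZ.
by move=> h; rewrite -h Hk // addKn.
Qed.

Definition maxl (gT : finGroupType) (G : {group gT}) x : Prop :=
  x \in G :\: 'Z(G) /\ forall v, v \in G :\: 'Z(G) ->
    'C_G[x] \subset 'C_G[v] -> 'C_G[v] = 'C_G[x].

Lemma exists_max (gT : finGroupType) (G : {group gT}) v : v \in G :\: 'Z(G) ->
  exists w, maxl G w /\ 'C_G[v] \subset 'C_G[w].
Proof.
move=> vGZ.
pose P := fun u => (u \in G :\: 'Z(G)) && ('C_G[v] \subset 'C_G[u]).
have Pv : P v by rewrite /P vGZ subxx.
case: (arg_maxnP (fun u => #|'C_G[u]|) Pv) => w /andP[wGZ sw] Hmax.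
exists w; split=> //; split=> // u uGZ swu.
have Pu : P u by rewrite /P uGZ (subset_trans sw swu).
have le := Hmax u Pu.
by apply/eqP; rewrite eq_sym eqEcard swu; exact: le.
Qed.

Lemma inZC (gT : finGroupType) (G : {group gT}) x a : x \in G ->
  (a \in 'Z('C_G[x])) = (a \in G) && ('C_G[x] \subset 'C_G[a]).
Proof.
move=> xG; apply/centerP/andP => [[aC ca]|[aG sCa]].
  split; first by move: aC; rewrite inC => /andP[].
  by apply/subsetP => g gC; rewrite inC; move: (gC); rewrite inC => /andP[-> _] /=; rewrite (ca g gC) eqxx.
split.
  have := subsetP sCa x (Cself xG); rewrite !inC aG /= => /andP[_ /eqP h]; by rewrite h eqxx.
move=> g gC; have := subsetP sCa g gC; rewrite inC => /andP[_ /eqP h]; by rewrite /commute h.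
Qed.


Lemma CsubM (gT : finGroupType) (G : {group gT}) (K : {set gT}) g h :
  K \subset 'C_G[g] -> K \subset 'C_G[h] -> K \subset 'C_G[g * h].
Proof. by move=> sg sh; apply: subset_trans (CM G g h); rewrite subsetI sg sh. Qed.

Lemma CsubMl (gT : finGroupType) (G : {group gT}) (K : {set gT}) g h :
  K \subset 'C_G[g * h] -> K \subset 'C_G[h] -> K \subset 'C_G[g].
Proof.
move=> s1 s2; have := CsubM s1 (_ : K \subset 'C_G[h^-1]).
by rewrite mulgK CV; apply.
Qed.

Lemma CsubMr (gT : finGroupType) (G : {group gT}) (K : {set gT}) g h :
  K \subset 'C_G[g * h] -> K \subset 'C_G[g] -> K \subset 'C_G[h].
Proof.
move=> s1 s2; have := CsubM (_ : K \subset 'C_G[g^-1]) s1.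
by rewrite mulKg CV; apply.
Qed.

Lemma commC (gT : finGroupType) (G : {group gT}) x y : y \in 'C_G[x] -> x \in G -> x \in 'C_G[y].
Proof. by rewrite !inC => /andP[_ /eqP h] ->; rewrite h eqxx. Qed.

Lemma maxA (gT : finGroupType) (G : {group gT}) x a : maxl G x ->
  a \in 'Z('C_G[x]) -> a \notin 'Z(G) -> 'C_G[a] = 'C_G[x].
Proof.
case=> xGZ xmax; move: (xGZ); rewrite inGZ => /andP[_ xG].
rewrite inZC // => /andP[aG s] aZ; apply: xmax => //; by rewrite inGZ aZ aG.
Qed.

Lemma maxZA (gT : finGroupType) (G : {group gT}) x : x \in G ->
  'Z(G) \subset 'Z('C_G[x]).
Proof.
move=> xG; apply/subsetP => z zZ; rewrite inZC // (CZ zZ) Csub andbT.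
exact: (subsetP (ZsubG G)).
Qed.

Lemma A_eq (gT : finGroupType) (G : {group gT}) x : maxl G x ->
  'Z('C_G[x]) = 'Z(G) :|: beta_set G x.
Proof.
move=> mx; have [xGZ _] := mx; move: (xGZ); rewrite inGZ => /andP[xZ xG].
apply/setP => a; rewrite in_setU; apply/idP/idP.
  move=> aA; case aZ: (a \in 'Z(G)) => //=.
  rewrite inE (maxA mx aA) ?aZ // eqxx andbT.
  by move: aA; rewrite inZC // => /andP[].
case/orP => [aZ|]; first by have := subsetP (maxZA xG) a aZ.
rewrite inE => /andP[aG /eqP E]; rewrite inZC // aG E subxx //.
Qed.

Lemma cardA (gT : finGroupType) (G : {group gT}) x b : maxl G x ->
  (forall y, y \in G :\: 'Z(G) -> #|beta_set G y| = b) ->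
  #|'Z('C_G[x])| = (#|'Z(G)| + b)%N.
Proof.
move=> mx hb; have [xGZ _] := mx.
rewrite (A_eq mx) cardsU (hb x xGZ).
suff -> : 'Z(G) :&: beta_set G x = set0 by rewrite cards0 subn0.
apply/setP => y; rewrite inE in_set0; apply/negP => /andP[yZ yb].
have := subsetP (beta_sub xGZ) y yb; by rewrite inGZ yZ.
Qed.

Lemma coset_bound (gT : finGroupType) (G : {group gT}) y (S : {set gT}) :
  y \in G :\: 'Z(G) -> S \subset G ->
  (forall s, s \in S -> 'C_G[y * s] = 'C_G[y]) -> #|S| <= #|beta_set G y|.
Proof.
move=> yGZ sS hS; rewrite -(card_lcoset S y); apply: subset_leq_card.
apply/subsetP => u /lcosetP [s sin ->]; rewrite inE (hS s sin) eqxx andbT.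
move: yGZ; rewrite inGZ => /andP[_ yG]; by rewrite groupM // (subsetP sS).
Qed.


Lemma inA_C (gT : finGroupType) (G : {group gT}) x a : a \in 'Z('C_G[x]) -> a \in 'C_G[x].
Proof. by move/(subsetP (center_sub _)). Qed.

Lemma partner (gT : finGroupType) (G : {group gT}) b x :
  (forall x, x \in G -> 'C_G[x] != beta_set G x :|: 'Z(G)) ->
  (forall y, y \in G :\: 'Z(G) -> #|beta_set G y| = b) ->
  maxl G x -> exists w, [/\ maxl G w, w \in 'C_G[x] & 'C_G[w] != 'C_G[x]].
Proof.
move=> hyp hb mx; have [xGZ xmax] := mx; move: (xGZ); rewrite inGZ => /andP[xZ xG].
case: (boolP [exists v in 'C_G[x] :\: 'Z(G), ~~ ('C_G[v] \subset 'C_G[x])]).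
  case/exists_inP => v; rewrite inE => /andP[vZ vC] nsub.
  have vG : v \in G by move: vC; rewrite inC => /andP[].
  have vGZ : v \in G :\: 'Z(G) by rewrite inGZ vZ vG.
  have [w [mw sw]] := exists_max vGZ.
  have [wGZ _] := mw; move: (wGZ); rewrite inGZ => /andP[wZ wG].
  exists w; split => //.
    have xw : x \in 'C_G[w] by apply: (subsetP sw); exact: commC.
    exact: commC.
  apply/negP => /eqP E; move: nsub; by rewrite -E sw.
move/exists_inPn => H.
have H' : forall v, v \in 'C_G[x] -> v \notin 'Z(G) -> 'C_G[v] \subset 'C_G[x].
  by move=> v vC vZ; have := H v; rewrite inE vZ vC negbK; apply.
have sB : beta_set G x :|: 'Z(G) \subset 'C_G[x].
  apply/subsetP => y; rewrite in_setU => /orP[|yZ].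
    rewrite inE => /andP[yG /eqP E]; rewrite -E; exact: Cself.
  rewrite inC (subsetP (ZsubG G) y yZ) /=.
  by apply/eqP; exact: (Zcomm yZ xG).
have : ~~ ('C_G[x] \subset beta_set G x :|: 'Z(G)).
  apply: contra (hyp x xG) => s; by rewrite eqEsubset s sB.
case/subsetPn => y yC; rewrite in_setU negb_or => /andP[yb yZ].
have yG : y \in G by move: yC; rewrite inC => /andP[].
have yGZ : y \in G :\: 'Z(G) by rewrite inGZ yZ yG.
have Cyx := H' y yC yZ.
exfalso.
have : #|'Z('C_G[x])| <= #|beta_set G y|.
  apply: coset_bound => //; first exact: subset_trans (center_sub _) (Csub _ _).
  move=> a aA.
  have aC := inA_C aA.
  have sxa : 'C_G[x] \subset 'C_G[a] by move: aA; rewrite inZC // => /andP[].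
  have yaC : y * a \in 'C_G[x] by rewrite groupM.
  have yaZ : y * a \notin 'Z(G).
    apply/negP => yaZ; move/negP: yb; apply.
    rewrite inE yG /=; apply/eqP/eqP; rewrite eqEsubset Cyx /=.
    apply: (CsubMl (h := a)); last exact: sxa.
    by rewrite (CZ yaZ) Csub.
  have Cya := H' _ yaC yaZ.
  apply/eqP; rewrite eqEsubset; apply/andP; split.
    apply: (CsubMl (h := a)); first exact: subxx.
    exact: subset_trans Cya sxa.
  apply: CsubM; first exact: subxx.
  exact: subset_trans Cyx sxa.
rewrite (cardA mx hb) (hb y yGZ) leqNgt -{1}[b]add0n ltn_add2r cardG_gt0; done.
Qed.


Lemma odd_sq (gT : finGroupType) (G : {group gT}) g :
  odd #|G| -> g \in G -> g * g \in 'Z(G) -> g \in 'Z(G).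
Proof.
move=> oG gG gg.
have on : odd #[g] := dvdn_odd (order_dvdG gG) oG.
have e : g = g ^+ (#[g]).+1 by rewrite expgSr expg_order mul1g.
have h2 : (#[g]).+1 = (2 * (#[g]).+1./2)%N.
  by rewrite mul2n -{1}(odd_double_half (#[g]).+1) /= on.
by rewrite e h2 expgnA expg2 groupX.
Qed.

Lemma A_comm (gT : finGroupType) (G : {group gT}) x u v :
  u \in 'Z('C_G[x]) -> v \in 'Z('C_G[x]) -> commute u v.
Proof.
move=> /centerP [_ cu] vA; apply: cu; exact: inA_C.
Qed.

Lemma pair_key (gT : finGroupType) (G : {group gT}) x w a c k :
  maxl G x -> maxl G w -> w \in 'C_G[x] ->
  a \in 'Z('C_G[x]) -> a \notin 'Z(G) -> a ^+ k \in 'Z(G) ->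
  c \in 'Z('C_G[w]) -> c ^+ k \notin 'Z(G) ->
  'C_G[a * c] = 'C_G[x] :&: 'C_G[w].
Proof.
move=> mx mw wC aA aZ akZ cA ckZ.
have [xGZ _] := mx; move: (xGZ); rewrite inGZ => /andP[xZ xG].
have [wGZ _] := mw; move: (wGZ); rewrite inGZ => /andP[wZ wG].
have xw : x \in 'C_G[w] := commC wC xG.
have cG : c \in G by move: cA; rewrite inZC // => /andP[].
have swc : 'C_G[w] \subset 'C_G[c] by move: cA; rewrite inZC // => /andP[].
have sxa : 'C_G[x] \subset 'C_G[a] by move: aA; rewrite inZC // => /andP[].
have cx : c \in 'C_G[x] by apply: commC => //; exact: (subsetP swc).
have ac : commute a c.
  have := subsetP sxa c cx; rewrite inC => /andP[_ /eqP h]; exact: (esym h).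
have Cck : 'C_G[c ^+ k] = 'C_G[w] by apply: (maxA mw) => //; exact: groupX.
have Ca : 'C_G[a] = 'C_G[x] by exact: maxA.
have s1 : 'C_G[a * c] \subset 'C_G[w].
  apply: subset_trans (CX G (a * c) k) _.
  rewrite expgMn // (CZM akZ (groupX k cG)) -Cck; exact: subxx.
apply/eqP; rewrite eqEsubset; apply/andP; split.
  rewrite subsetI s1 andbT -Ca.
  apply: (CsubMl (h := c)); first exact: subxx.
  exact: subset_trans s1 swc.
apply: CsubM.
  by rewrite Ca subsetIl.
exact: subset_trans (subsetIr _ _) swc.
Qed.

Lemma arith (o t z b : nat) : o <= t -> o + t = z + b -> t + t <= b -> 0 < z -> False.
Proof. lia. Qed.

Lemma pair (gT : finGroupType) (G : {group gT}) b x w a k :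
  odd #|G| -> (forall y, y \in G :\: 'Z(G) -> #|beta_set G y| = b) ->
  maxl G x -> maxl G w -> w \in 'C_G[x] -> 'C_G[w] != 'C_G[x] ->
  a \in 'Z('C_G[x]) -> a \notin 'Z(G) -> a ^+ k \in 'Z(G) ->
  forall c, c \in 'Z('C_G[w]) -> c ^+ k \in 'Z(G).
Proof.
move=> oG hb mx mw wC neq aA aZ akZ c0 c0A.
have [xGZ _] := mx; move: (xGZ); rewrite inGZ => /andP[xZ xG].
have [wGZ _] := mw; move: (wGZ); rewrite inGZ => /andP[wZ wG].
apply/negPn/negP => c0Z.
have aG : a \in G by move: aA; rewrite inZC // => /andP[].
have c0G : c0 \in G by move: c0A; rewrite inZC // => /andP[].
pose P := [set c | c ^+ k \in 'Z(G)].
pose T := 'Z('C_G[w]) :\: P.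
pose Om := 'Z('C_G[w]) :&: P.
have hT : forall c, c \in T -> c \in 'Z('C_G[w]) /\ c ^+ k \notin 'Z(G).
  by move=> c; rewrite in_setD in_set => /andP[nk cA].
have c0T : c0 \in T by rewrite in_setD c0A andbT in_set.
have OmT : #|Om| <= #|T|.
  rewrite -(card_lcoset Om c0); apply: subset_leq_card; apply/subsetP => u.
  case/lcosetP => o /setIP [oA]; rewrite in_set => okZ ->.
  rewrite in_setD in_set (groupM c0A oA) andbT.
  have co := A_comm c0A oA; rewrite (expgMn _ co).
  apply/negP => h; move/negP: c0Z; apply.
  by rewrite -(mulgK (o ^+ k) (c0 ^+ k)) groupM // groupV.
have cardAw : #|'Z('C_G[w])| = (#|Om| + #|T|)%N by rewrite cardsID.
pose y := a * c0.
have Cy : 'C_G[y] = 'C_G[x] :&: 'C_G[w] by apply: (pair_key mx mw wC aA aZ akZ c0A c0Z).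
have yG : y \in G by rewrite groupM.
have yZ : y \notin 'Z(G).
  apply/negP => yZ; have := subsetIl 'C_G[x] 'C_G[w]; rewrite -Cy (CZ yZ) => sGx.
  by move: (notZ xG xZ); rewrite eqEsubset Csub sGx.
have yGZ : y \in G :\: 'Z(G) by rewrite inGZ yZ yG.
have aVA : a^-1 \in 'Z('C_G[x]) by rewrite groupV.
have aVZ : a^-1 \notin 'Z(G) by rewrite groupV.
have aVk : a^-1 ^+ k \in 'Z(G) by rewrite expgVn groupV.
have sub1 : a *: T \subset beta_set G y.
  apply/subsetP => u /lcosetP [t tT ->]; have [tA tk] := hT t tT.
  have tG : t \in G by move: tA; rewrite inZC // => /andP[].
  by rewrite inE groupM //= (pair_key mx mw wC aA aZ akZ tA tk) Cy eqxx.
have sub2 : a^-1 *: T \subset beta_set G y.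
  apply/subsetP => u /lcosetP [t tT ->]; have [tA tk] := hT t tT.
  have tG : t \in G by move: tA; rewrite inZC // => /andP[].
  by rewrite inE groupM ?groupV //= (pair_key mx mw wC aVA aVZ aVk tA tk) Cy eqxx.
have disj : a *: T :&: a^-1 *: T = set0.
  apply/setP => u; rewrite inE in_set0; apply/negP => /andP[].
  case/lcosetP => t1 t1T -> /lcosetP [t2 t2T e].
  have [t1A _] := hT t1 t1T; have [t2A _] := hT t2 t2T.
  have e2 : a * a = t2 * t1^-1.
    have -> : a * a = a * (a * t1) * t1^-1 by rewrite mulgA mulgK.
    by rewrite e mulKVg.
  move/negP: aZ; apply; apply: (odd_sq oG aG).
  have h1 : a * a \in 'Z('C_G[x]) by rewrite groupM.
  have h2 : a * a \in 'Z('C_G[w]) by rewrite e2 groupM ?groupV.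
  apply/negPn/negP => aaZ.
  have E1 := maxA mx h1 aaZ; have E2 := maxA mw h2 aaZ.
  by move/eqP: neq; apply; rewrite -E1 -E2.
have : (#|T| + #|T| <= b)%N.
  rewrite -(hb y yGZ) -{1}(card_lcoset T a) -(card_lcoset T a^-1).
  have su : a *: T :|: a^-1 *: T \subset beta_set G y by rewrite subUset sub1 sub2.
  by have := subset_leq_card su; rewrite cardsU disj cards0 subn0.
move=> hTT; have hc := cardA mw hb; rewrite cardAw in hc.
have hz : 0 < #|'Z(G)| by apply/card_gt0P; exists 1; exact: group1.
exact: (arith OmT hc hTT hz).
Qed.


Lemma uniform_p (gT : finGroupType) (G : {group gT}) b x :
  (forall y, y \in G :\: 'Z(G) -> #|beta_set G y| = b) -> maxl G x ->
  prime (pdiv ((#|'Z(G)| + b) %/ #|'Z(G)|)) /\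
  exists2 a, a \in 'Z('C_G[x]) & a \notin 'Z(G) /\
     a ^+ (pdiv ((#|'Z(G)| + b) %/ #|'Z(G)|)) \in 'Z(G).
Proof.
move=> hb mx; have [xGZ _] := mx; move: (xGZ); rewrite inGZ => /andP[xZ xG].
have sZA : 'Z(G) \subset 'Z('C_G[x]) := maxZA xG.
have hL := Lagrange sZA.
have hA := cardA mx hb.
have zpos : 0 < #|'Z(G)| by apply/card_gt0P; exists 1; exact: group1.
have bpos : 0 < b.
  rewrite -(hb x xGZ); apply/card_gt0P; exists x; rewrite inE xG eqxx //.
have n0E : #|'Z('C_G[x]) : 'Z(G)| = ((#|'Z(G)| + b) %/ #|'Z(G)|)%N.
  by rewrite -hA -hL mulKn.
have n0gt1 : 1 < #|'Z('C_G[x]) : 'Z(G)|.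
  rewrite ltnNge; apply/negP => le1.
  have : (#|'Z(G)| * #|'Z('C_G[x]) : 'Z(G)| <= #|'Z(G)|)%N.
    by rewrite -{2}[#|'Z(G)|]muln1 leq_mul2l le1 orbT.
  rewrite hL hA; lia.
set p := pdiv _.
have pr : prime p by rewrite /p -n0E; exact: pdiv_prime.
split=> //.
have nA : 'Z('C_G[x]) \subset 'N('Z(G)).
  apply: subset_trans (normal_norm (center_normal G)).
  exact: subset_trans (center_sub _) (Csub _ _).
have cq : #|'Z('C_G[x]) / 'Z(G)| = #|'Z('C_G[x]) : 'Z(G)| := card_quotient nA.
have pd : p %| #|('Z('C_G[x]) / 'Z(G))%G| by rewrite /= cq n0E pdiv_dvd.
have [q qin oq] := Cauchy pr pd.
move: qin => /= /morphimP [a aN aA qE].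
exists a => //; split.
  apply/negP => aZ; have e1 : coset_morphism 'Z(G) a = 1 := coset_id aZ.
  by move: pr; rewrite -oq qE e1 order1.
apply: coset_idr; first exact: groupX.
have e2 : coset_morphism 'Z(G) (a ^+ p) = q ^+ p by rewrite morphX // -qE.
by rewrite e2 -oq expg_order.
Qed.


Theorem corollary3p7 (gT : finGroupType) (G : {group gT}) :
  induced_regular G -> odd #|G| ->
  (forall x, x \in G -> 'C_G[x] != beta_set G x :|: 'Z(G)) ->
  exists p : nat, prime p /\ elementary_pgroup p (G / 'Z(G)).
Proof.
move=> ir oG hyp; have [b hb] := reg_beta ir.
have [v vGZ] : exists v, v \in G :\: 'Z(G).
  case: (pickP (mem (G :\: 'Z(G)))) => [v0 vin|H]; first by exists v0.
  exfalso.
  have sGZ : G \subset 'Z(G).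
    apply/subsetP => g gG; have := H g; rewrite /= inGZ gG andbT; by move/negbFE.
  move/negP: (hyp 1 (group1 G)); apply.
  rewrite (CZ (group1 _)) eqEsubset; apply/andP; split.
    by apply: subset_trans sGZ _; exact: subsetUr.
  rewrite subUset ZsubG andbT; apply/subsetP => y; rewrite inE => /andP[].
  by [].
have [x0 [mx0 _]] := exists_max vGZ.
have [pr _] := uniform_p hb mx0.
set p := pdiv _ in pr.
have Ap : forall x, maxl G x -> forall c, c \in 'Z('C_G[x]) -> c ^+ p \in 'Z(G).
  move=> x mx.
  have [xGZ _] := mx; move: (xGZ); rewrite inGZ => /andP[xZ xG].
  have [_ [a aA [aZ apZ]]] := uniform_p hb mx.
  have [w [mw wC neq]] := partner hyp hb mx.
  have [wGZ _] := mw; move: (wGZ); rewrite inGZ => /andP[wZ wG].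
  have Hw := pair oG hb mx mw wC neq aA aZ apZ.
  have wA : w \in 'Z('C_G[w]) by rewrite inZC // wG subxx.
  have neq' : 'C_G[x] != 'C_G[w] by rewrite eq_sym.
  exact: (pair oG hb mw mx (commC wC xG) neq' wA wZ (Hw w wA)).
have gp : forall g, g \in G -> g ^+ p \in 'Z(G).
  move=> g gG; apply/negPn/negP => gpZ.
  have gZ : g \notin 'Z(G) by apply: contra gpZ => gZ; exact: groupX.
  have gGZ : g \in G :\: 'Z(G) by rewrite inGZ gZ gG.
  have gpGZ : g ^+ p \in G :\: 'Z(G) by rewrite inGZ gpZ groupX.
  have [w [mw sw]] := exists_max gpGZ.
  have [wGZ _] := mw; move: (wGZ); rewrite inGZ => /andP[wZ wG].
  have : #|'Z('C_G[w])| <= #|beta_set G g|.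
    apply: coset_bound => //; first exact: subset_trans (center_sub _) (Csub _ _).
    move=> c cA.
    have cG : c \in G by move: cA; rewrite inZC // => /andP[].
    have swc : 'C_G[w] \subset 'C_G[c] by move: cA; rewrite inZC // => /andP[].
    have sg : 'C_G[g] \subset 'C_G[c].
      exact: subset_trans (CX G g p) (subset_trans sw swc).
    have gc : commute g c.
      have := subsetP sg g (Cself gG); rewrite inC => /andP[_ /eqP h]; exact: h.
    have s1 : 'C_G[g * c] \subset 'C_G[c].
      apply: subset_trans (CX G (g * c) p) _.
      rewrite (expgMn _ gc) (CMZ _ (Ap w mw c cA)).
      exact: subset_trans sw swc.
    apply/eqP; rewrite eqEsubset; apply/andP; split.
      apply: (CsubMl (h := c)); [exact: subxx | exact: s1].
    apply: CsubM; [exact: subxx | exact: sg].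
  rewrite (cardA mw hb) (hb g gGZ) leqNgt -{1}[b]add0n ltn_add2r.
  have hz : 0 < #|'Z(G)| by apply/card_gt0P; exists 1; exact: group1.
  by rewrite hz.
exists p; split => // q /morphimP [g gN gG ->] q1.
have e : coset_morphism 'Z(G) g ^+ p = 1.
  have e1 : coset_morphism 'Z(G) (g ^+ p) = 1 := coset_id (gp g gG).
  by rewrite -morphX.
have : #[coset_morphism 'Z(G) g] %| p by rewrite order_dvdn e.
case/primeP: pr => _ /[apply] /orP [/eqP o1|/eqP //].
by move: q1; rewrite -order_eq1 o1.
Qed.
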